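(* Let $r,s\ge2$ be fixed integers, and consider the equation in $x\in(-1,\infty)$ \[ (rs-r-s)\Big(1+\frac{x}{r-1}\Big)^{s-2}=(1+x)\Big(rs-r-s+sx+\frac{x(x+1)}{r-1}\Big).\tag{$\ast$} \] Then $x=0$ is a solution of $(\ast)$. Moreover: (a) If $s\in\{2,3,4\}$ and $(r,s)\ne(2,2)$, then $x=0$ is the unique solution of $(\ast)$ on $(-1,\infty)$. (b) If $s\ge5$ and $r\ge s-1$, then $(\ast)$ has no solutions on $(-1,0)$ and at most one solution on $(0,\infty)$. *)

(* Defs.v *)
From Stdlib Require Import Reals Lra Lia.
Open Scope R_scope.

Definition eqLHS (r s : nat) (x : R) : R :=
  (INR r * INR s - INR r - INR s) * (1 + x / (INR r - 1)) ^ (s - 2).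

Definition eqRHS (r s : nat) (x : R) : R :=
  (1 + x) * (INR r * INR s - INR r - INR s + INR s * x
             + x * (x + 1) / (INR r - 1)).

Definition is_sol (r s : nat) (x : R) : Prop := eqLHS r s x = eqRHS r s x.

(* Main.v *)
Require Import Defs.
From Stdlib Require Import Reals Lra Lia Psatz.
From Coquelicot Require Import Coquelicot.
Open Scope R_scope.
Definition qf (a c ss x : R) := c + ss*x + x*(x+1)/a.
Definition qd (a ss x : R) := ss + (2*x+1)/a.
Definition Nf (a c ss : R) (n : nat) (x : R) :=
  (a+x)*qf a c ss x + (1+x)*(a+x)*qd a ss x - INR n*(1+x)*qf a c ss x.
Definition Rf (a c ss : R) (n : nat) (x : R) :=
  (1+x)*(c + ss*x + x*(x+1)/a) / (1 + x/a)^n.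
Lemma deriv_Rf a c ss n x : 0 < a -> 0 < 1 + x/a -> (1 <= n)%nat ->
  is_derive (Rf a c ss n) x (Nf a c ss n x / (a * (1+x/a)^n * (1+x/a))).
Proof.
intros Ha Hu Hn. unfold Rf.
assert (Hp : 0 < (1+x/a)^n) by (apply pow_lt; lra).
auto_derive.
- apply pow_nonzero. unfold Rdiv in *. lra.
- destruct n as [|m]; [lia|]. simpl pred. rewrite <- !tech_pow_Rmult. 
  unfold Nf, qf, qd. rewrite S_INR. 
  assert (0 < (1+x/a)^m) by (apply pow_lt; lra).
  unfold Rdiv in *. set (p := (1 + x * / a)^m) in *. assert (a + x = a*(1+x*/a)) by (field; lra). field. repeat split; nra.
Qed.

Lemma u_pos a z : 1 <= a -> -1 < z -> 0 < 1 + z/a.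
Proof. intros Ha Hz. replace (1 + z/a) with ((a+z)/a) by (field; lra).
apply Rdiv_lt_0_compat; lra. Qed.

Lemma mvt_Rf a c ss n x y : 1 <= a -> -1 < x -> x < y -> (1 <= n)%nat ->
  exists z, x < z < y /\
   Rf a c ss n y - Rf a c ss n x =
     Nf a c ss n z / (a * (1+z/a)^n * (1+z/a)) * (y - x).
Proof.
intros Ha Hx Hxy Hn.
destruct (MVT_cor2 (Rf a c ss n)
  (fun z => Nf a c ss n z / (a * (1+z/a)^n * (1+z/a))) x y Hxy) as [z [Hz1 Hz2]].
- intros z Hz. apply is_derive_Reals. apply deriv_Rf; auto; try lra.
  apply u_pos; lra.
- exists z. split; auto.
Qed.

Lemma den_pos a n z : 1 <= a -> -1 < z -> 0 < a * (1+z/a)^n * (1+z/a).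
Proof. intros Ha Hz. pose proof (u_pos a z Ha Hz).
assert (0 < (1+z/a)^n) by (apply pow_lt; lra).
apply Rmult_lt_0_compat; [apply Rmult_lt_0_compat|]; lra. Qed.

Section B.
Variables (a c ss : R) (n : nat).
Hypothesis Ha : 3 <= a.
Hypothesis Hss : 5 <= ss.
Hypothesis Hn : INR n = ss - 2.
Hypothesis Han : ss - 2 <= a.
Hypothesis Hc : c = (a+1)*ss - (a+1) - ss.

Lemma q_pos x : -1 < x -> 0 < qf a c ss x.
Proof.
intros Hx. unfold qf.
assert (E : c + ss*x + x*(x+1)/a = (c - ss) + (x+1)*(ss + x/a)) by (field; lra).
rewrite E. assert (x/a > -1/a) by (unfold Rdiv; apply Rmult_lt_compat_r;
 [apply Rinv_0_lt_compat; lra| lra]).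
assert (1/a <= 1) by (unfold Rdiv; rewrite Rmult_1_l; rewrite <- Rinv_1; apply Rinv_le_contravar; lra).
rewrite Hc. nra.
Qed.

Lemma qd_pos x : -1 < x -> 0 < qd a ss x.
Proof.
intros Hx. unfold qd.
assert ((2*x+1)/a > -1/a) by (unfold Rdiv; apply Rmult_lt_compat_r;
 [apply Rinv_0_lt_compat; lra| lra]).
assert (1/a <= 1) by (unfold Rdiv; rewrite Rmult_1_l; rewrite <- Rinv_1; apply Rinv_le_contravar; lra).
lra.
Qed.

Lemma N_pos_neg x : -1 < x <= 0 -> 0 < Nf a c ss n x.
Proof.
intros Hx. pose proof (q_pos x ltac:(lra)). pose proof (qd_pos x ltac:(lra)).
unfold Nf. rewrite Hn.
assert (E : (a + x) * qf a c ss x + (1 + x) * (a + x) * qd a ss x -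
  (ss - 2) * (1 + x) * qf a c ss x =
  qf a c ss x * ((a - (ss-2)) + x*(3 - ss)) + ((1+x)*(a+x)) * qd a ss x) by ring.
rewrite E. apply Rplus_le_lt_0_compat.
- apply Rmult_le_pos; nra.
- apply Rmult_lt_0_compat; [|lra]. nra.
Qed.

Definition K0 := c*(a-(ss-2)) + (a*ss+1).
Definition K2 := ((a*ss+1)*(2-(ss-2)) + 3*a + 2 - (ss-2))/a.
Definition K3 := (3-(ss-2))/a.

Lemma N_ident z w :
  z * Nf a c ss n w = w * Nf a c ss n z + (w - z) * (- K0 + K2*z*w + K3*z*w*(w+z)).
Proof.
unfold Nf, qf, qd, K0, K2, K3. rewrite Hn. rewrite Hc. field. lra.
Qed.

Lemma N_decr z w : 0 < z < w -> Nf a c ss n z <= 0 -> Nf a c ss n w < 0.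
Proof.
intros Hzw HN. pose proof (N_ident z w) as E.
assert (HK0 : 0 < K0). { unfold K0. assert (0 < c) by (rewrite Hc; nra). assert (0 <= c*(a-(ss-2))) by (apply Rmult_le_pos; lra). nra. }
assert (HK2 : K2 < 0). { unfold K2. unfold Rdiv. assert (0 < /a) by (apply Rinv_0_lt_compat; lra).
  assert (0 <= (a*ss+1)*(ss-5)) by (apply Rmult_le_pos; nra).
  assert (a*ss >= 5*a) by nra.
  assert ((a*ss+1)*(2-(ss-2)) + 3*a + 2 - (ss-2) < 0) by nra. nra. }
assert (HK3 : K3 <= 0). { unfold K3. unfold Rdiv. assert (0 < /a) by (apply Rinv_0_lt_compat; lra).
  nra. }
assert (T : - K0 + K2*z*w + K3*z*w*(w+z) < 0).
{ assert (K2*z*w < 0) by (assert (0 < z*w) by nra; nra).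
  assert (K3*z*w*(w+z) <= 0) by (assert (0 < z*w*(w+z)) by (apply Rmult_lt_0_compat; nra); nra).
  lra. }
assert (z * Nf a c ss n w < 0) by nra.
nra.
Qed.

Lemma Rf0 : Rf a c ss n 0 = c.
Proof. unfold Rf. replace (1 + 0/a) with 1 by (field; lra). rewrite pow1. field; lra. Qed.

Hypothesis Hn1 : (1 <= n)%nat.

Lemma no_neg x : -1 < x < 0 -> Rf a c ss n x <> c.
Proof.
intros Hx HR. destruct (mvt_Rf a c ss n x 0 ltac:(lra) ltac:(lra) ltac:(lra) Hn1) as [z [Hz E]].
rewrite Rf0, HR in E.
pose proof (N_pos_neg z ltac:(lra)). pose proof (den_pos a n z ltac:(lra) ltac:(lra)).
assert (0 < Nf a c ss n z / (a * (1 + z / a) ^ n * (1 + z / a)) * (0 - x)).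
{ apply Rmult_lt_0_compat; [apply Rdiv_lt_0_compat|]; lra. }
lra.
Qed.

Lemma zero_deriv x y : -1 < x < y -> Rf a c ss n x = Rf a c ss n y ->
  exists z, x < z < y /\ Nf a c ss n z = 0.
Proof.
intros Hxy HR. destruct (mvt_Rf a c ss n x y ltac:(lra) ltac:(lra) ltac:(lra) Hn1) as [z [Hz E]].
exists z. split; auto. rewrite HR in E. pose proof (den_pos a n z ltac:(lra) ltac:(lra)).
replace (Rf a c ss n y - Rf a c ss n y) with 0 in E by ring.
symmetry in E. apply Rmult_integral in E. destruct E as [E|E]; [|lra].
unfold Rdiv in E. apply Rmult_integral in E. destruct E as [E|E]; auto.
pose proof (Rinv_neq_0_compat _ (Rgt_not_eq _ _ H)). contradiction.
Qed.

Lemma uniq_pos x y : 0 < x < y -> Rf a c ss n x = c -> Rf a c ss n y = c -> False.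
Proof.
intros Hxy Hx Hy.
destruct (zero_deriv 0 x ltac:(lra) ltac:(rewrite Rf0; auto)) as [z1 [Hz1 E1]].
destruct (zero_deriv x y ltac:(lra) ltac:(congruence)) as [z2 [Hz2 E2]].
pose proof (N_decr z1 z2 ltac:(lra) ltac:(lra)). lra.
Qed.

End B.

Theorem lemmaA2 (r s : nat) (hr : (2 <= r)%nat) (hs : (2 <= s)%nat) :
  is_sol r s 0 /\
  ((s = 2%nat \/ s = 3%nat \/ s = 4%nat) -> ~ (r = 2%nat /\ s = 2%nat) ->
     forall x : R, -1 < x -> is_sol r s x -> x = 0) /\
  ((5 <= s)%nat -> (s - 1 <= r)%nat ->
     (forall x : R, -1 < x < 0 -> ~ is_sol r s x) /\
     (forall x y : R, 0 < x -> 0 < y -> is_sol r s x -> is_sol r s y -> x = y)).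
Proof.
assert (Hr : 2 <= INR r) by (replace 2 with (INR 2) by (simpl; ring); apply le_INR; auto).
split.
{ unfold is_sol, eqLHS, eqRHS. replace (1 + 0/(INR r - 1)) with 1 by (field; lra).
  rewrite pow1. field. lra. }
split.
- intros Hs Hne x Hx H. unfold is_sol, eqLHS, eqRHS in H.
  set (rr := INR r) in *.
  destruct Hs as [-> | [-> | ->]].
  + assert (Hr3 : 3 <= rr).
    { unfold rr. replace 3 with (INR 3) by (simpl; ring). apply le_INR.
      destruct (Nat.eq_dec r 2); [exfalso; auto|lia]. }
    simpl (2-2)%nat in H. replace (INR 2) with 2 in H by (simpl; ring).
    set (B := (rr - 2) + (1+x)*(2 + (x+1)/(rr-1))).
    assert (E : (1 + x) * (rr * 2 - rr - 2 + 2 * x + x * (x + 1) / (rr - 1)) -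
        (rr * 2 - rr - 2) * (1 + x / (rr - 1)) ^ 0 = x * B) by (unfold B; simpl; field; lra).
    assert (0 < B).
    { unfold B. assert (0 < (x+1)/(rr-1)) by (apply Rdiv_lt_0_compat; lra). nra. }
    assert (x * B = 0) by lra. apply Rmult_integral in H1; lra.
  + simpl (3-2)%nat in H. replace (INR 3) with 3 in H by (simpl; ring).
    set (c := rr*3 - rr - 3) in *.
    set (B := c*(rr-2)/(rr-1) + 3*(1+x) + (x+1)^2/(rr-1)).
    assert (E : (1 + x) * (c + 3 * x + x * (x + 1) / (rr - 1)) -
        c * (1 + x / (rr - 1)) ^ 1 = x * B) by (unfold B, c; field; lra).
    assert (0 < B).
    { unfold B. assert (0 <= c*(rr-2)/(rr-1)) by (apply Rdiv_le_0_compat; unfold c; nra).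
      assert (0 <= (x+1)^2/(rr-1)) by (apply Rdiv_le_0_compat; nra). lra. }
    assert (x * B = 0) by lra. apply Rmult_integral in H1; lra.
  + simpl (4-2)%nat in H. replace (INR 4) with 4 in H by (simpl; ring).
    set (c := rr*4 - rr - 4) in *.
    set (a := rr - 1) in *.
    set (B := (a*(1+x)^2 + (1+x)*(4*a^2 - c) + c*(a-1)^2)/a^2).
    assert (E : (1 + x) * (c + 4 * x + x * (x + 1) / a) -
        c * (1 + x / a) ^ 2 = x * B) by (unfold B, c, a; field; lra).
    assert (0 < B).
    { unfold B. apply Rdiv_lt_0_compat; [|unfold a; nra].
      assert (0 < a*(1+x)^2) by (unfold a; apply Rmult_lt_0_compat; nra).
      assert (0 <= (1+x)*(4*a^2 - c)) by (unfold c, a; apply Rmult_le_pos; nra).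
      assert (0 <= c*(a-1)^2) by (unfold c, a; apply Rmult_le_pos; nra). lra. }
    assert (x * B = 0) by lra. apply Rmult_integral in H1; lra.
- intros Hs5 Hsr.
  set (a := INR r - 1). set (ss := INR s).
  set (c := INR r * INR s - INR r - INR s).
  assert (Hss : 5 <= ss) by (unfold ss; replace 5 with (INR 5) by (simpl; ring); apply le_INR; auto).
  assert (Hn : INR (s-2) = ss - 2) by (unfold ss; rewrite minus_INR by lia; simpl; ring).
  assert (Hsr' : INR (s-1) <= INR r) by (apply le_INR; auto).
  rewrite minus_INR in Hsr' by lia. simpl INR in Hsr'.
  assert (Ha : 3 <= a) by (unfold a; fold ss in Hsr'; lra).
  assert (Han : ss - 2 <= a) by (unfold a; fold ss in Hsr'; lra).
  assert (Hc : c = (a+1)*ss - (a+1) - ss) by (unfold c, a, ss; ring).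
  assert (Hn1 : (1 <= s-2)%nat) by lia.
  assert (Hsol : forall x, -1 < x -> is_sol r s x -> Rf a c ss (s-2) x = c).
  { intros x Hx H. unfold is_sol, eqLHS, eqRHS in H. fold a c ss in H.
    unfold Rf. rewrite <- H. pose proof (u_pos a x ltac:(lra) Hx).
    assert (0 < (1+x/a)^(s-2)) by (apply pow_lt; lra). field. lra. }
  split.
  + intros x Hx H. apply (no_neg a c ss (s-2) Ha Hss Hn Han Hc Hn1 x Hx).
    apply Hsol; auto; lra.
  + intros x y Hx Hy H1 H2. apply Hsol in H1; [|lra]. apply Hsol in H2; [|lra].
    destruct (Rtotal_order x y) as [Hl|[Hl|Hl]]; auto; exfalso.
    * exact (uniq_pos a c ss (s-2) Ha Hss Hn Han Hc Hn1 x y ltac:(lra) H1 H2).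
    * exact (uniq_pos a c ss (s-2) Ha Hss Hn Han Hc Hn1 y x ltac:(lra) H2 H1).
Qed.
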